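(* Let $n\ge2$, $m\ge1$. Let $H_C$ be any Hermitian operator on the $mn$ qubits that is diagonal in the computational basis, and let $U_C(\gamma)=e^{-i\gamma H_C}$. Let $U_M(\beta)=\bigotimes_{b=0}^{m-1}e^{-i\beta H_M^{(b)}}$ where $H_M^{(b)}=\sum_{0\le i<j\le n-1}(X_i^{(b)}X_j^{(b)}+Y_i^{(b)}Y_j^{(b)})$ acts on block $b$. Let $|s_0\rangle=|W_n\rangle^{\otimes m}$ with $|W_n\rangle=\frac1{\sqrt n}\sum_{k=0}^{n-1}|e_k\rangle$. Then for every product basis vector $|x^\star\rangle\in\mathcal H_{\mathrm{OH}}$ and every $(\gamma,\beta)\in\mathbb R^2$ there exists a blockwise permutation $\mathsf P^\star=\bigotimes_{b=0}^{m-1}\mathsf P_b$ such that $$\bigl|\langle x^\star|\mathsf P^{\star\dagger}U_M(\beta)U_C(\gamma)|s_0\rangle\bigr|^2\ \ge\ \frac{1}{n^m}.$$ In particular this holds when $x^\star$ is a feasible optimal label and $(\gamma,\beta)$ ranges over the grid $\{j\pi/n: j=0,\dots,n\}^2$.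
   Context: A block is a register of $n$ qubits; $|e_k\rangle$ denotes the $n$-qubit basis state with qubit $k$ in $|1\rangle$ and all others in $|0\rangle$, $\mathcal H_1=\mathrm{span}\{|e_0\rangle,\dots,|e_{n-1}\rangle\}$, and $\mathcal H_{\mathrm{OH}}=\mathcal H_1^{\otimes m}$ (dimension $n^m$) with product basis $|x\rangle=|e_{j_0}\rangle\otimes\cdots\otimes|e_{j_{m-1}}\rangle$, $x\in\{0,\dots,n-1\}^m$. $X_i^{(b)},Y_i^{(b)}$ are Pauli operators on qubit $i$ of block $b$. Both $U_C(\gamma)$ and $U_M(\beta)$ map $\mathcal H_{\mathrm{OH}}$ to itself. A blockwise permutation is $\mathsf P=\bigotimes_b\mathsf P_b$ with $\mathsf P_b|e_j\rangle=|e_{\pi_b(j)}\rangle$ for permutations $\pi_b$ of $\{0,\dots,n-1\}$. *)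

(* Defs.v *)
From HB Require Import structures.
From mathcomp Require Import all_boot all_order all_algebra all_fingroup.
From mathcomp Require Import all_classical all_reals all_analysis.
From mathcomp Require Import complex.
Set Implicit Arguments. Unset Strict Implicit. Unset Printing Implicit Defensive.
Import Order.TTheory GRing.Theory Num.Theory.
Import numFieldNormedType.Exports.
Local Open Scope ring_scope.

Section QAOA.
Variable R : realType.
Definition C : numClosedFieldType := R[i].
Definition iC : C := Complex 0 1.
Definition rC (x : R) : C := Complex x 0.
Definition cconj (z : C) : C := conjc z.

(* Operators on the Hilbert space C^T spanned by the computational basis
   states indexed by a finite type T: A z' z = <z'|A|z>.  Vectors: T -> C. *)
Definition op (T : finType) := T -> T -> C.
Definition vec (T : finType) := T -> C.

Definition opmul (T : finType) (A B : op T) : op T :=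
  fun z z' => \sum_(y : T) A z y * B y z'.
Definition opid (T : finType) : op T := fun z z' => (z == z')%:R.
Definition oppow (T : finType) (A : op T) (k : nat) : op T :=
  iter k (opmul A) (@opid T).
Definition opscale (T : finType) (c : C) (A : op T) : op T :=
  fun z z' => c * A z z'.
Definition opadj (T : finType) (A : op T) : op T := fun z z' => cconj (A z' z).
Definition opapp (T : finType) (A : op T) (v : vec T) : vec T :=
  fun z => \sum_(z' : T) A z z' * v z'.
Definition inner (T : finType) (u v : vec T) : C := \sum_(z : T) cconj (u z) * v z.

Definition expop (T : finType) (A : op T) : op T :=
  fun z z' => limn (fun N : nat => \sum_(k < N) (k`!%:R)^-1 * oppow A k z z').

(* computational basis of a block of n qubits and of m blocks *)
Definition Qb (n : nat) := {ffun 'I_n -> bool}.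
Definition Q (m n : nat) := {ffun 'I_m -> Qb n}.

(* single-qubit Pauli matrices, sigma out in = <out|sigma|in>, |0> = false *)
Definition sigX (a b : bool) : C := (a != b)%:R.
Definition sigY (a b : bool) : C :=
  if a == b then 0 else if a then iC else - iC.

Definition onqubit (n : nat) (i : 'I_n) (s : bool -> bool -> C) : op (Qb n) :=
  fun z' z => (\prod_(j < n | j != i) (z' j == z j)%:R) * s (z' i) (z i).

Definition HM (n : nat) : op (Qb n) :=
  fun z' z => \sum_(i < n) \sum_(j < n | (i < j)%N)
     (opmul (onqubit i sigX) (onqubit j sigX) z' z +
      opmul (onqubit i sigY) (onqubit j sigY) z' z).

Definition tensop (m n : nat) (A : 'I_m -> op (Qb n)) : op (Q m n) :=
  fun z' z => \prod_(b < m) A b (z' b) (z b).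
Definition tensvec (m n : nat) (v : 'I_m -> vec (Qb n)) : vec (Q m n) :=
  fun z => \prod_(b < m) v b (z b).

Definition UC (m n : nat) (HC : op (Q m n)) (gamma : R) : op (Q m n) :=
  expop (opscale (- iC * rC gamma) HC).
Definition UM (m n : nat) (beta : R) : op (Q m n) :=
  tensop (fun _ : 'I_m => expop (opscale (- iC * rC beta) (@HM n))).

Definition ek (n : nat) (k : 'I_n) : Qb n := [ffun i => i == k].
Definition ket (T : finType) (z : T) : vec T := fun z' => (z' == z)%:R.

Definition Wn (n : nat) : vec (Qb n) :=
  fun z => rC ((Num.sqrt (n%:R : R))^-1) * \sum_(k < n) ket (ek k) z.
Definition s0 (m n : nat) : vec (Q m n) := tensvec (fun _ : 'I_m => @Wn n).

Definition prodbasis (m n : nat) (x : 'I_m -> 'I_n) : vec (Q m n) :=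
  tensvec (fun b => ket (ek (x b))).

(* qubit permutation of a block by pi: P|z> = |z o pi^-1>, so P|e_j> = |e_{pi j}> *)
Definition permop (n : nat) (pi : {perm 'I_n}) : op (Qb n) :=
  fun z' z => ([ffun j => z' (pi j)] == z)%:R.
Definition blockperm (m n : nat) (pi : 'I_m -> {perm 'I_n}) : op (Q m n) :=
  tensop (fun b => permop (pi b)).

Definition diagonal_op (T : finType) (H : op T) : Prop :=
  forall z z', z != z' -> H z z' = 0.
Definition hermitian_op (T : finType) (H : op T) : Prop :=
  forall z z', H z' z = cconj (H z z').

End QAOA.

(* Main.v *)
Require Import Defs.
From HB Require Import structures.
From mathcomp Require Import all_boot all_order all_algebra all_fingroup.
From mathcomp Require Import all_classical all_reals all_analysis.
From mathcomp Require Import complex.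
From mathcomp Require Import ring lra.
Import Order.TTheory GRing.Theory Num.Theory.
Import numFieldNormedType.Exports.
Local Open Scope ring_scope.
Section S.
Variable R : realType.
Local Open Scope complex_scope. Local Open Scope classical_set_scope.
Local Notation CC := (C R).
Lemma iCiC : iC R * iC R = -1.
Proof. by apply/eqP; rewrite eq_complex /= !(mul0r, mulr1, mulr0, add0r, sub0r, oppr0) !eqxx. Qed.

Lemma rCE (x : R) : rC x = x%:C. Proof. by []. Qed.
Lemma iCr (x : R) : iC R * x%:C = Complex 0 x.
Proof. by apply/eqP; rewrite eq_complex /= !(mul0r, mulr1, mulr0, add0r, sub0r, oppr0, mul1r, addr0, subr0) !eqxx. Qed.
Lemma natC k : (k%:R : CC) = (k%:R : R)%:C.
Proof. by rewrite rmorph_nat. Qed.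
Lemma termE (t : R) k : (k`!%:R)^-1 * (iC R * rC t)^+k = Complex (cos_coeff t k) (sin_coeff t k) :> CC.
Proof.
have [j [->|->]] : exists j, k = j.*2 \/ k = j.*2.+1.
  exists k./2; rewrite -{1 3}(odd_double_half k); case: (odd k); [right|left] => //.
- rewrite /cos_coeff /sin_coeff /= odd_double doubleK /= exprMn -mul2n exprM expr2 iCiC.
  have -> : (-1 : CC) = (-1 : R)%:C by rewrite rmorphN1.
  rewrite natC rCE -fmorphV -!rmorphXn -!rmorphM; apply/eqP; rewrite eq_complex /=.
  rewrite !mul0r eqxx andbT -exprnP; apply/eqP; ring.
- rewrite /cos_coeff /sin_coeff /= odd_double /= -[in LHS]addn1 exprD expr1 exprMn -mul2n exprM expr2 iCiC.
  have -> : (-1 : CC) = (-1 : R)%:C by rewrite rmorphN1.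
  rewrite natC rCE -fmorphV -!rmorphXn -!rmorphM.
  rewrite -/(iC R) mulrCA mulrA -rmorphM iCr mul0r mul1r. congr Complex.
  - ring.
  - rewrite mul2n doubleK addn1 exprS; ring.
Qed.


Lemma serE t N : \sum_(k < N) (k`!%:R)^-1 * (iC R * rC t)^+k = Complex (series (cos_coeff t) N) (series (sin_coeff t) N) :> CC.
Proof.
under eq_bigr do rewrite termE.
rewrite /series /= !big_mkord; elim: N => [|N IH]; first by rewrite !big_ord0.
by rewrite !big_ord_recr /= IH.
Qed.

Lemma normC_le (z : CC) : `|z| <= (`|complex.Re z| + `|complex.Im z|)%:C.
Proof.
rewrite normc_def lecR.
have h0 : 0 <= `|complex.Re z| + `|complex.Im z| by rewrite addr_ge0.
rewrite -(ger0_norm h0) -(sqrtr_sqr (`|complex.Re z| + `|complex.Im z|)).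
apply: ler_wsqrtr; rewrite -[complex.Re z ^+ 2](real_normK (num_real _)) -[complex.Im z ^+ 2](real_normK (num_real _)).
have := normr_ge0 (complex.Re z); have := normr_ge0 (complex.Im z); nra.
Qed.

Lemma cvgC (f : nat -> CC) a b : (fun N => complex.Re (f N)) @ \oo --> a ->
  (fun N => complex.Im (f N)) @ \oo --> b -> f @ \oo --> (Complex a b : CC).
Proof.
move=> ha hb; apply/cvgrPdist_lt => e e0.
move: (e0); rewrite ltcE /= => /andP[/eqP He Re0].
have e2 : 0 < complex.Re e / 2 by rewrite divr_gt0.
move: ha hb => /cvgrPdist_lt/(_ _ e2) ha /cvgrPdist_lt/(_ _ e2) hb.
near=> N.
have h1 : `|a - complex.Re (f N)| < complex.Re e / 2 by near: N.
have h2 : `|b - complex.Im (f N)| < complex.Re e / 2 by near: N.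
apply: le_lt_trans (normC_le _) _.
have -> : e = (complex.Re e)%:C by move: He; case: (e) => ? ? /= ->.
rewrite ltcR; case: (f N) h1 h2 => x y /= h1 h2.
by rewrite (splitr (complex.Re e)) ltrD.
Unshelve. all: by end_near.
Qed.

Definition Eph (t : R) : CC := Complex (cos t) (sin t).

Lemma ser_cvg t : (fun N => \sum_(k < N) (k`!%:R)^-1 * (iC R * rC t)^+k : CC) @ \oo --> Eph t.
Proof.
under eq_fun do rewrite serE.
apply: cvgC => /=.
- rewrite unlock; exact: is_cvg_series_cos_coeff.
- rewrite unlock; exact: is_cvg_series_sin_coeff.
Qed.

Lemma Eph_norm t : cconj (Eph t) * Eph t = 1.
Proof.
apply/eqP; rewrite eq_complex /=; apply/andP; split; apply/eqP; last by ring.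
by rewrite mulNr opprK -!expr2 cos2Dsin2.
Qed.


Definition XY (p q r s : bool) : CC := sigX R p q * sigX R r s + sigY R p q * sigY R r s.
Lemma XYE p q r s : XY p q r s = ((p != q) && (r != s) && (p != r))%:R *+ 2.
Proof.
case: p; case: q; case: r; case: s;
 rewrite /XY /sigX /sigY /= ?(mul0r, mulr0, mul1r, mulr1, addr0, add0r, mulNr, mulrN, opprK, iCiC) //; by rewrite ?subrr mul0rn.
Qed.

Lemma prod_zero (I : finType) (P : pred I) (F : I -> CC) i : P i -> F i = 0 -> \prod_(j | P j) F j = 0.
Proof. by move=> Pi Fi; rewrite (bigD1 i) //= Fi mul0r. Qed.

Lemma prod_bool (I : finType) (P : pred I) (B : pred I) :
  \prod_(j | P j) (B j)%:R = ([forall j, P j ==> B j]%:R : CC).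
Proof.
case: (boolP [forall j, _]) => [/forallP h | /forallPn [j]].
  by rewrite big1 // => j Pj; have := h j; rewrite Pj /= => ->.
by rewrite negb_imply => /andP[Pj Bj]; rewrite (@prod_zero _ _ _ j Pj) // (negbTE Bj).
Qed.

Lemma onqubit_mul n (a b : 'I_n) s t z' z : a != b ->
  opmul (onqubit a s) (onqubit b t) z' z =
  (\prod_(j < n | (j != a) && (j != b)) ((z' j == z j)%:R : CC)) * s (z' a) (z a) * t (z' b) (z b).
Proof.
move=> ab; set y0 : Qb n := [ffun j => if j == a then z a else z' j].
rewrite /opmul (bigD1 y0) //= big1 ?addr0; last first.
  move=> y yy0; case: (boolP [forall j, y j == y0 j]) => [/forallP h | /forallPn [j hj]].
    by case/eqP: yy0; apply/ffunP => j; apply/eqP.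
  rewrite /onqubit; case: (eqVneq j a) => [ja | ja].
    have ba : a != b by [].
    have h0 : ((y a == z a)%:R : CC) = 0.
      by move: hj; rewrite ja ffunE eqxx => /negbTE ->.
    by rewrite (@prod_zero _ (fun k => k != b) _ a ba h0) mul0r mulr0.
  have h0 : ((z' j == y j)%:R : CC) = 0.
    by move: hj; rewrite ffunE (negbTE ja) eq_sym => /negbTE ->.
  by rewrite (@prod_zero _ (fun k => k != a) _ j ja h0) mul0r mul0r.
rewrite /onqubit big1 ?mul1r; last by move=> k ka; rewrite ffunE (negbTE ka) eqxx.
rewrite (bigD1 a) //=.
rewrite !ffunE eqxx [b == a]eq_sym (negbTE ab) eqxx mul1r.
rewrite (eq_bigr (fun i => (z' i == z i)%:R)); last by move=> i /andP[_ ia]; rewrite ffunE (negbTE ia).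
rewrite (eq_bigl (fun j => (j != a) && (j != b))); last by move=> j; rewrite andbC.
by rewrite mulrCA mulrA.
Qed.

Lemma ekE n (k j : 'I_n) : ek k j = (j == k). Proof. by rewrite ffunE. Qed.
Lemma ek_inj n : injective (@ek n).
Proof. by move=> i j /ffunP/(_ i); rewrite !ffunE eqxx => /esym/eqP. Qed.
Lemma eqek n (z : Qb n) j : (z == ek j) = [forall k, z k == (k == j)].
Proof.
apply/eqP/forallP => [-> k | h]; first by rewrite ffunE.
by apply/ffunP=> k; rewrite ffunE; apply/eqP/h.
Qed.

Lemma boolkey n (a b i : 'I_n) (z' : Qb n) : a != b ->
  [forall j, (j != a) && (j != b) ==> (z' j == (j == i))] &&
  ((z' a != (a == i)) && (z' b != (b == i)) && (z' a != z' b))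
  = (a == i) && (z' == ek b) || (b == i) && (z' == ek a).
Proof.
move=> ab; apply/idP/idP.
- move/andP => [/forallP F /andP[/andP[ha hb] hab]].
  case: (eqVneq a i) => [ai|ai].
  + subst i; rewrite /=; rewrite eqxx in ha.
    have za : z' a = false by move: ha; case: (z' a).
    have zb : z' b = true by move: hab; rewrite za; case: (z' b).
    apply/orP; left; rewrite eqek; apply/forallP => k.
    case: (eqVneq k a) => [-> | ka]; first by rewrite za eq_sym (negbTE ab).
    case: (eqVneq k b) => [-> | kb]; first by rewrite zb eqxx.
    by have := F k; rewrite ka kb /= => /eqP ->; rewrite (negbTE ka).
  + apply/orP; right.
    have za : z' a = true by move: ha; rewrite (negbTE ai); case: (z' a).
    have zb : z' b = false by move: hab; rewrite za; case: (z' b).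
    have bi : b == i by move: hb; rewrite zb; case: (b == i).
    rewrite bi /= eqek; apply/forallP => k.
    case: (eqVneq k a) => [-> | ka]; first by rewrite za eqxx.
    case: (eqVneq k b) => [-> | kb]; first by rewrite zb.
    by have := F k; rewrite ka kb /= -(eqP bi) (negbTE kb).
- case/orP => [/andP[/eqP ai /eqP ->] | /andP[/eqP bi /eqP ->]]; subst i.
  + rewrite !ekE !eqxx [b == a]eq_sym (negbTE ab) /= andbT.
    by apply/forallP => j; apply/implyP => /andP[ja jb]; rewrite ekE (negbTE ja) (negbTE jb).
  + rewrite !ekE !eqxx [b == a]eq_sym (negbTE ab) /= andbT.
    by apply/forallP => j; apply/implyP => /andP[ja jb]; rewrite ekE (negbTE ja) (negbTE jb).
Qed.

Lemma HM_ek n (z' : Qb n) i : @HM R n z' (ek i) = (\sum_(j < n | j != i) ((z' == ek j)%:R : CC)) *+ 2.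
Proof.
rewrite /HM.
transitivity (\sum_(a < n) \sum_(b < n | (a < b)%N)
   ((((a == i) && (z' == ek b)) || ((b == i) && (z' == ek a)))%:R *+ 2 : CC)).
  apply: eq_bigr => a _; apply: eq_bigr => b ab.
  have ab' : a != b by rewrite neq_ltn ab.
  rewrite !onqubit_mul // -!mulrA -mulrDr -/(XY _ _ _ _) XYE.
  under eq_bigr do rewrite ekE.
  by rewrite prod_bool !ekE mulrnAr -natrM mulnb boolkey.
have orR (x y : bool) : ~~ (x && y) -> ((x || y)%:R : CC) = x%:R + y%:R.
  by case: x; case: y => // _; rewrite /= ?add0r ?addr0.
under eq_bigr do rewrite sumrMnl.
rewrite sumrMnl; congr (_ *+ 2).
transitivity (\sum_(a < n) \sum_(b < n | (a < b)%N) (((a == i) && (z' == ek b))%:R : CC) +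
              \sum_(a < n) \sum_(b < n | (a < b)%N) (((b == i) && (z' == ek a))%:R : CC)).
  rewrite -big_split; apply: eq_bigr => a _; rewrite -big_split; apply: eq_bigr => b ab.
  apply: orR; apply/negP => /andP[/andP[/eqP ai _] /andP[/eqP bi _]].
  by move: ab; rewrite ai bi ltnn.
rewrite (bigD1 i) //= [X in _ + X + _]big1 ?addr0; last first.
  by move=> a ai; apply: big1 => b _; rewrite (negbTE ai).
under eq_bigr do rewrite eqxx andTb.
rewrite [X in _ + X](_ : _ = \sum_(a < n | (a < i)%N) ((z' == ek a)%:R : CC)); last first.
  rewrite [RHS]big_mkcond; apply: eq_bigr => a _.
  case: (boolP (a < i)%N) => ai.
    rewrite (bigD1 i) //= eqxx andTb big1 ?addr0 // => b /andP[_ bi].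
    by rewrite (negbTE bi).
  rewrite big1 // => b ab; case: (eqVneq b i) => // bi.
  by move: ai; rewrite -bi ab.
rewrite [RHS](bigID (fun j : 'I_n => (j < i)%N)) /= addrC; congr (_ + _); apply: eq_bigl => j.
- by rewrite -val_eqE /= neq_ltn; case: ltngtP.
- by rewrite -val_eqE /= neq_ltn; case: ltngtP.
Qed.

Lemma oppowS (T : finType) (A : op R T) k : oppow A k.+1 = opmul A (oppow A k).
Proof. by []. Qed.

Section Pow.
Variables (n : nat) (c : CC).
Hypothesis n0 : (n%:R : CC) != 0.
Definition al : CC := c *+ 2 * (n%:R - 1).
Definition be : CC := - (c *+ 2).
Definition g k (i l : 'I_n) : CC := (al ^+ k - be ^+ k) / n%:R + be ^+ k * (i == l)%:R.

Lemma sum_g k l : \sum_(i < n) g k i l = (al ^+ k - be ^+ k) + be ^+ k.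
Proof.
rewrite big_split /= sumr_const card_ord -[_ *+ n]mulr_natr divfK //; congr (_ + _).
by rewrite (bigD1 l) //= eqxx mulr1 big1 ?addr0 // => i il; rewrite (negbTE il) mulr0.
Qed.

Lemma oppow_HM k z' l : oppow (opscale c (@HM R n)) k z' (ek l) =
  \sum_(i < n) ket R (ek i) z' * g k i l.
Proof.
elim: k z' => [|k IH] z'.
  rewrite /g !expr0 subrr mul0r.
  under eq_bigr do rewrite add0r mul1r.
  rewrite /ket (bigD1 l) //= eqxx mulr1 big1 ?addr0 // => i il.
  by rewrite (negbTE il) mulr0.
rewrite oppowS /opmul.
under eq_bigr do rewrite IH big_distrr /=.
rewrite exchange_big /=.
transitivity (\sum_(i < n) c * @HM R n z' (ek i) * g k i l).
  apply: eq_bigr => i _; rewrite (bigD1 (ek i)) //= /ket eqxx mul1r big1 ?addr0 //.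
  by move=> y yi; rewrite (negbTE yi) mul0r mulr0.
rewrite (eq_bigr (fun i => c * ((\sum_(j < n | j != i) ((z' == ek j)%:R : CC)) *+ 2) * g k i l)); last first.
  by move=> i _; rewrite HM_ek.
rewrite (eq_bigr (fun i => \sum_(j < n | j != i) (z' == ek j)%:R * (c *+ 2 * g k i l))); last first.
  by move=> i _; rewrite -sumrMnl mulr_sumr big_distrl /=; apply: eq_bigr => j _; ring.
rewrite (exchange_big_dep predT) //=; apply: eq_bigr => j _.
rewrite -big_distrr /= /ket; congr (_ * _).
have h : \sum_(i < n) c *+ 2 * g k i l = c *+ 2 * g k j l + \sum_(i < n | i != j) c *+ 2 * g k i l.
  by rewrite (bigD1 j).
rewrite (eq_bigl (fun i => i != j)); last by move=> i; rewrite eq_sym.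
apply: (addrI (c *+ 2 * g k j l)); rewrite -h -big_distrr /= sum_g.
rewrite /g !exprS; set A := al ^+ k; set B := be ^+ k; rewrite /al /be.
by field.
Qed.

Lemma oppow_HM_ek k j l : oppow (opscale c (@HM R n)) k (ek j) (ek l) = g k j l.
Proof.
rewrite oppow_HM (bigD1 j) //= /ket eqxx mul1r big1 ?addr0 // => i ij.
by rewrite (inj_eq (@ek_inj n)) eq_sym (negbTE ij) mul0r.
Qed.

Definition Sr (w : CC) N := \sum_(k < N) (k`!%:R)^-1 * w ^+ k.

Lemma sum_g_ser N j l : \sum_(k < N) (k`!%:R)^-1 * g k j l =
  (Sr al N - Sr be N) / n%:R + Sr be N * (j == l)%:R.
Proof.
rewrite /Sr; elim: N => [|N IH]; first by rewrite !big_ord0 subrr mul0r mul0r addr0.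
rewrite !big_ord_recr /= IH /g; set a := \sum_(i < N) _; set b := \sum_(i < N) _.
set f := N`!%:R^-1; set A := al ^+ N; set B := be ^+ N; set d := (j == l)%:R.
by field.
Qed.
End Pow.

Lemma expop_lim (T : finType) (A : op R T) z z' (L : CC) :
  (fun N => \sum_(k < N) (k`!%:R)^-1 * oppow A k z z') @ \oo --> L -> expop A z z' = L.
Proof. by move=> h; rewrite /expop; apply: cvg_lim h. Qed.

Definition Mx n (beta : R) (j l : 'I_n) : CC :=
  (Eph (- (beta * 2 * (n%:R - 1))) - Eph (beta * 2)) / n%:R + Eph (beta * 2) * (j == l)%:R.

Lemma V_ek n (n0 : (0 < n)%N) beta j l :
  expop (opscale (- iC R * rC beta) (@HM R n)) (ek j) (ek l) = Mx n beta j l.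
Proof.
have n0' : (n%:R : CC) != 0 by rewrite pnatr_eq0 -lt0n.
apply: expop_lim.
rewrite (_ : (fun N => _) = (fun N => (Sr (al n (- iC R * rC beta)) N - Sr (be (- iC R * rC beta)) N) / n%:R
   + Sr (be (- iC R * rC beta)) N * (j == l)%:R)); last first.
  by apply/funext => N; under eq_bigr do rewrite (oppow_HM_ek _ _ n0'); rewrite sum_g_ser.
have hal : al n (- iC R * rC beta) = iC R * rC (- (beta * 2 * (n%:R - 1))).
  rewrite /al !rCE !(rmorphN, rmorphM, rmorphB, rmorph_nat, rmorph1). ring.
have hbe : be (- iC R * rC beta) = iC R * rC (beta * 2).
  rewrite /be !rCE !(rmorphN, rmorphM, rmorphB, rmorph_nat, rmorph1). ring.
rewrite hal hbe.
apply: cvgD; first apply: cvgM; first apply: cvgB.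
- exact: ser_cvg.
- exact: ser_cvg.
- exact: cvg_cst.
- apply: cvgM; [exact: ser_cvg | exact: cvg_cst].
Qed.

Lemma oppow_diag (T : finType) (H : op R T) w : diagonal_op H ->
  forall k z z', oppow (opscale w H) k z z' = (z == z')%:R * (w * H z z) ^+ k.
Proof.
move=> hd; elim=> [|k IH] z z'; first by rewrite expr0 mulr1.
rewrite oppowS /opmul (bigD1 z') //= IH eqxx mul1r big1 ?addr0; last first.
  by move=> y yz; rewrite IH (negbTE yz) mul0r mulr0.
case: (eqVneq z z') => [<-|zz]; first by rewrite mul1r exprS /opscale.
by rewrite /opscale hd // mulr0 mul0r mul0r.
Qed.

Lemma UC_entry m n (HC : op R (Q m n)) (hdiag : diagonal_op HC) (hherm : hermitian_op HC) gamma z z' :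
  UC HC gamma z z' = (z == z')%:R * Eph (- (gamma * complex.Re (HC z z))).
Proof.
apply: expop_lim.
rewrite (_ : (fun N => _) = (fun N => (z == z')%:R * Sr (- iC R * rC gamma * HC z z) N)); last first.
  apply/funext => N; rewrite /Sr mulr_sumr; apply: eq_bigr => k _.
  by rewrite oppow_diag // mulrCA.
case: (eqVneq z z') => [_|zz]; last first.
  rewrite mul0r; under eq_fun do rewrite mul0r; exact: cvg_cst.
rewrite mul1r; under eq_fun do rewrite mul1r.
have -> : - iC R * rC gamma * HC z z = iC R * rC (- (gamma * complex.Re (HC z z))).
  have := hherm z z; case: (HC z z) => a b /= [hb].
  have b0 : b = 0 by move: hb => /eqP; rewrite -subr_eq0 opprK -mulr2n mulrn_eq0 /= => /eqP.
  by rewrite b0 /= complexr0 !rCE !(rmorphN, rmorphM); ring.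
exact: ser_cvg.
Qed.

Lemma sum_delta n (F : 'I_n -> CC) k : \sum_(j < n) F j * (j == k)%:R = F k.
Proof.
rewrite (bigD1 k) //= eqxx mulr1 big1 ?addr0 // => j jk.
by rewrite (negbTE jk) mulr0.
Qed.

Lemma cconjE (z : CC) : cconj z = conjc z. Proof. by []. Qed.

Lemma sum4 n (a b c d : CC) (k l : 'I_n) :
  \sum_(j < n) (a + b * (j == k)%:R) * (c + d * (j == l)%:R) =
  n%:R * (a * c) + a * d + b * c + b * d * (k == l)%:R.
Proof.
transitivity (\sum_(j < n) (a * c) + \sum_(j < n) (a * d) * (j == l)%:R +
   \sum_(j < n) (b * c) * (j == k)%:R + \sum_(j < n) (b * d * (k == l)%:R) * (j == k)%:R).
  rewrite -!big_split /=; apply: eq_bigr => j _.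
  case: (eqVneq j k) => [->|jk]; rewrite ?mulr1 ?mulr0 ?addr0; ring.
by rewrite !sum_delta sumr_const card_ord mulr_natl.
Qed.

Lemma Mx_unit n (n0 : (0 < n)%N) beta k l :
  \sum_(j < n) cconj (Mx n beta j k) * Mx n beta j l = (k == l)%:R.
Proof.
have n0' : (n%:R : CC) != 0 by rewrite pnatr_eq0 -lt0n.
rewrite /Mx; set u := Eph (beta * 2); set v := Eph _.
have hu : cconj u * u = 1 := Eph_norm _.
have hv : cconj v * v = 1 := Eph_norm _.
rewrite (eq_bigr (fun j => ((cconj v - cconj u) / n%:R + cconj u * (j == k)%:R) * ((v - u) / n%:R + u * (j == l)%:R))); last first.
  by move=> j _; congr (_ * _); rewrite cconjE !(rmorphD, rmorphM, rmorphB, rmorphN, fmorphV, rmorph_nat).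
rewrite sum4.
have -> : n%:R * ((cconj v - cconj u) / n%:R * ((v - u) / n%:R)) + (cconj v - cconj u) / n%:R * u +
   cconj u * ((v - u) / n%:R) + cconj u * u * (k == l)%:R =
   (cconj v * v - cconj u * u) / n%:R + cconj u * u * (k == l)%:R by field.
by rewrite hu hv subrr mul0r add0r mul1r.
Qed.
Definition ex m n (x : 'I_m -> 'I_n) : Q m n := [ffun b => ek (x b)].
Arguments ex {m n}.

Lemma prod_eq (I : finType) (T : eqType) (z w : {ffun I -> T}) :
  \prod_(b : I) ((z b == w b)%:R : CC) = (z == w)%:R.
Proof.
rewrite prod_bool; apply: (congr1 (fun b : bool => (b%:R : CC))).
apply/forallP/eqP => [h|->]; last by move=> b; rewrite /= eqxx.
by apply/(@ffunP I (fun _ => T)) => b; apply/eqP; exact: (h b).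
Qed.

Lemma sum_deltaT (T : finType) (F : T -> CC) e : \sum_(z : T) (z == e)%:R * F z = F e.
Proof.
rewrite (bigD1 e) //= eqxx mul1r big1 ?addr0 // => z ze.
by rewrite (negbTE ze) mul0r.
Qed.

Lemma cconj_nat k : cconj (k%:R : CC) = k%:R.
Proof. by rewrite cconjE rmorph_nat. Qed.

Lemma inner_prodbasis m n (x : 'I_m -> 'I_n) (v : vec R (Q m n)) :
  inner (prodbasis R x) v = v (ex x).
Proof.
rewrite /inner /prodbasis /tensvec /ket.
rewrite -[RHS](@sum_deltaT _ v); apply: eq_bigr => z _; congr (_ * _).
rewrite (eq_bigr (fun b => ((z b == ex x b)%:R : CC))); last by move=> b _; rewrite ffunE.
by rewrite prod_eq cconj_nat.
Qed.

Lemma permek n (p : {perm 'I_n}) (zb : Qb n) k :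
  ([ffun j => zb (p j)] == ek k) = (zb == ek (p k)).
Proof.
apply/eqP/eqP => h.
  apply/ffunP => j'; have := congr1 (fun f : Qb n => f ((p^-1)%g j')) h.
  by rewrite !ffunE permKV -(inj_eq (@perm_inj _ p)) permKV.
by apply/ffunP => j; rewrite !ffunE h ffunE (inj_eq (@perm_inj _ p)).
Qed.

Lemma adj_blockperm m n (pi : 'I_m -> {perm 'I_n}) (x : 'I_m -> 'I_n) (v : vec R (Q m n)) :
  opapp (opadj (blockperm R pi)) v (ex x) = v (ex (fun b => pi b (x b))).
Proof.
rewrite /opapp /opadj -[RHS](@sum_deltaT _ v); apply: eq_bigr => z _; congr (_ * _).
rewrite /blockperm /tensop /permop.
rewrite (eq_bigr (fun b => ((z b == ex (fun b => pi b (x b)) b)%:R : CC))); last first.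
  by move=> b _; rewrite !ffunE permek.
by rewrite prod_eq cconj_nat.
Qed.
Definition Ew m n (HC : op R (Q m n)) gamma (w : 'I_m -> 'I_n) : CC :=
  Eph (- (gamma * complex.Re (HC (ex w) (ex w)))).
Arguments Ew {m n}.

Lemma psi_formula m n (n0 : (0 < n)%N) (HC : op R (Q m n)) (hdiag : diagonal_op HC)
  (hherm : hermitian_op HC) (gamma beta : R) (y : 'I_m -> 'I_n) :
  opapp (UM (R:=R) (m:=m) (n:=n) beta) (opapp (UC HC gamma) (s0 R (m:=m) (n:=n))) (ex y) =
  rC (Num.sqrt (n%:R : R))^-1 ^+ m * \sum_(w : {ffun 'I_m -> 'I_n})
     (\prod_(b < m) Mx n beta (y b) (w b)) * Ew HC gamma w.
Proof.
set r := rC (Num.sqrt (n%:R : R))^-1.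
have hphi : forall z, opapp (UC HC gamma) (s0 R (m:=m) (n:=n)) z =
    Eph (- (gamma * complex.Re (HC z z))) * s0 R (m:=m) (n:=n) z.
  move=> z; rewrite /opapp -(@sum_deltaT _ (fun z' => Eph (- (gamma * complex.Re (HC z z))) * s0 R (m:=m) (n:=n) z') z).
  by apply: eq_bigr => z' _; rewrite UC_entry // eq_sym mulrA.
have hs : forall z, s0 R (m:=m) (n:=n) z = r ^+ m * \sum_(w : {ffun 'I_m -> 'I_n}) ((z == ex w)%:R : CC).
  move=> z; rewrite /s0 /tensvec /Wn big_split /= prodr_const card_ord; congr (_ * _).
  rewrite bigA_distr_bigA /=; apply: eq_bigr => w _; rewrite /ket.
  rewrite (eq_bigr (fun b => ((z b == ex w b)%:R : CC))); last by move=> b _; rewrite ffunE.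
  by rewrite prod_eq.
rewrite /opapp.
transitivity (\sum_z UM (R:=R) (m:=m) (n:=n) beta (ex y) z * (Eph (- (gamma * complex.Re (HC z z))) *
    (r ^+ m * \sum_(w : {ffun 'I_m -> 'I_n}) ((z == ex w)%:R : CC)))).
  by apply: eq_bigr => z _; rewrite -/(opapp _ _ z) hphi hs.
transitivity (r ^+ m * \sum_(w : {ffun 'I_m -> 'I_n}) \sum_z (z == ex w)%:R *
    (UM (R:=R) (m:=m) (n:=n) beta (ex y) z * Eph (- (gamma * complex.Re (HC z z))))).
  rewrite exchange_big mulr_sumr /=; apply: eq_bigr => z _.
  by rewrite -mulr_suml; ring.
congr (_ * _); apply: eq_bigr => w _; rewrite sum_deltaT /Ew; congr (_ * _).
rewrite /UM /tensop; apply: eq_bigr => b _; rewrite !ffunE.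
exact: V_ek.
Qed.
Lemma normsq (z : CC) : `|z| ^+ 2 = z * cconj z.
Proof. exact: sqr_normc. Qed.

Lemma unit_tensor m n (n0 : (0 < n)%N) beta (w w' : {ffun 'I_m -> 'I_n}) :
  \sum_(y : {ffun 'I_m -> 'I_n}) (\prod_(b < m) Mx n beta (y b) (w b)) *
      cconj (\prod_(b < m) Mx n beta (y b) (w' b)) = (w' == w)%:R.
Proof.
rewrite -prod_eq.
rewrite (eq_bigr (fun b => \sum_(j < n) cconj (Mx n beta j (w' b)) * Mx n beta j (w b))); last first.
  by move=> b _; rewrite Mx_unit.
rewrite bigA_distr_bigA /=; apply: eq_bigr => y _.
rewrite cconjE rmorph_prod -big_split /=; apply: eq_bigr => b _.
by rewrite mulrC.
Qed.

Lemma sum_norm m n (n0 : (0 < n)%N) beta (E : {ffun 'I_m -> 'I_n} -> CC)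
  (hE : forall w, cconj (E w) * E w = 1) :
  \sum_(y : {ffun 'I_m -> 'I_n}) `| rC (Num.sqrt (n%:R : R))^-1 ^+ m *
     \sum_(w : {ffun 'I_m -> 'I_n}) (\prod_(b < m) Mx n beta (y b) (w b)) * E w | ^+ 2 = 1.
Proof.
set r := rC (Num.sqrt (n%:R : R))^-1.
have hr : r * cconj r = (n%:R)^-1.
  rewrite /r cconjE rCE conjc_real -rmorphM /= -expr2 exprVn sqr_sqrtr ?ler0n //.
  by rewrite fmorphV rmorph_nat.
transitivity (\sum_(y : {ffun 'I_m -> 'I_n}) (n%:R^-1) ^+ m *
   \sum_(w : {ffun 'I_m -> 'I_n}) \sum_(w' : {ffun 'I_m -> 'I_n})
     (E w * cconj (E w')) * ((\prod_(b < m) Mx n beta (y b) (w b)) *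
      cconj (\prod_(b < m) Mx n beta (y b) (w' b)))).
  apply: eq_bigr => y _; rewrite normsq cconjE rmorphM rmorphXn.
  rewrite mulrACA -exprMn hr; congr (_ * _).
  rewrite rmorph_sum big_distrl /=; apply: eq_bigr => w _.
  rewrite big_distrr /=; apply: eq_bigr => w' _.
  by rewrite rmorphM; ring.
rewrite -mulr_sumr exchange_big /=.
under eq_bigr do rewrite exchange_big /=.
transitivity ((n%:R^-1) ^+ m * \sum_(w : {ffun 'I_m -> 'I_n}) (1 : CC)).
  congr (_ * _); apply: eq_bigr => w _.
  rewrite (eq_bigr (fun w' => (w' == w)%:R * (E w * cconj (E w')))); last first.
    by move=> w' _; rewrite -big_distrr /= unit_tensor // mulrC.
  by rewrite sum_deltaT mulrC hE.
rewrite sumr_const card_ffun !card_ord -mulr_natr natrX -exprMn mul1r mulVf ?expr1n //.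

by rewrite pnatr_eq0 -lt0n.
Qed.
End S.

Arguments ex {m n}.

Theorem mainTheorem9 (R : realType) (n m : nat) (hn : (2 <= n)%N) (hm : (1 <= m)%N)
  (HC : op R (Q m n)) (hdiag : diagonal_op HC) (hherm : hermitian_op HC)
  (xstar : 'I_m -> 'I_n) (gamma beta : R) :
  exists pi : 'I_m -> {perm 'I_n},
    ((n ^ m)%:R)^-1 <=
    `| inner (prodbasis R xstar)
         (opapp (opadj (blockperm R pi))
            (opapp (UM (R:=R) (m:=m) (n:=n) beta)
               (opapp (UC HC gamma) (s0 R (m:=m) (n:=n))))) | ^+ 2.
Proof.
have n0 : (0 < n)%N by apply: leq_trans hn.
set psi := opapp (UM (R:=R) (m:=m) (n:=n) beta) (opapp (UC HC gamma) (s0 R (m:=m) (n:=n))).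
have hsum : \sum_(y : {ffun 'I_m -> 'I_n}) `|psi (ex y)| ^+ 2 = 1.
  rewrite /psi; under eq_bigr do rewrite psi_formula //.
  by apply: sum_norm => // w; apply: Eph_norm.
have [y hy] : exists y : {ffun 'I_m -> 'I_n}, ((n ^ m)%:R)^-1 <= `|psi (ex y)| ^+ 2.
  case: (pselect (exists y : {ffun 'I_m -> 'I_n}, ((n ^ m)%:R)^-1 <= `|psi (ex y)| ^+ 2)) => // hno.
  exfalso.
  have hlt : forall y : {ffun 'I_m -> 'I_n}, `|psi (ex y)| ^+ 2 < ((n ^ m)%:R)^-1.
    move=> y; rewrite real_ltNge; first by apply/negP => h; apply: hno; exists y.
    - by apply: rpredX; apply: normr_real.
    - by rewrite realV realn.
  have y0 : {ffun 'I_m -> 'I_n} := [ffun _ => Ordinal n0].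
  have := @ltr_sum _ _ (index_enum {ffun 'I_m -> 'I_n}) predT _ _ _ (fun y _ => hlt y).
  have hh : has predT (index_enum {ffun 'I_m -> 'I_n}).
    by apply/hasP; exists y0; rewrite ?mem_index_enum.
  move/(_ hh); rewrite hsum sumr_const card_ffun !card_ord -[_ *+ (n ^ m)]mulr_natr mulVf ?ltxx //.
  by rewrite pnatr_eq0 expn_eq0 negb_and -lt0n n0.
exists (fun b => tperm (xstar b) (y b)).
rewrite inner_prodbasis adj_blockperm.
rewrite (_ : ex (fun b => tperm (xstar b) (y b) (xstar b)) = ex y) //.
by apply/ffunP => b; rewrite !ffunE tpermL.
Qed.
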